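(* Let $\Sigma$ be a subset of $\mathbb{R}^n$ that spans $\mathbb{R}^n$. Let $\|\cdot\|$ be a norm on $\mathbb{R}^n$ such that $\|f\|_\infty\le\|f\|^*$ for every $f\in\mathbb{R}^n$. Suppose there is a function $c$ such that for every $\epsilon>0$ and every $f$ with $\|f\|_\infty\le1$ and $\|f\|\ge\epsilon$ there exists $\sigma\in\Sigma$ with $|\langle f,\sigma\rangle|\ge c(\epsilon)>0$. Let $\theta>0$ and let $\eta:\mathbb{R}_+\to\mathbb{R}_+$ be decreasing. Then there exists a constant $C_0$, depending on $\eta$ and $\theta$ only, such that every $f\in\mathbb{R}^n$ with $\|f\|_2\le1$ has a decomposition $f=\sum_{i=1}^k\lambda_i\sigma_i+f_2+f_3$ in which each $\sigma_i\in\Sigma$ and there is a constant $C\le C_0$ with $\sum_{i=1}^k|\lambda_i|\le C$, $\|f_2\|\le\eta(C)$ and $\|f_3\|_1\le\theta$.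
   Context: Functions in $\mathbb{R}^n$ are functions on $\{1,\dots,n\}$ with $\langle f,g\rangle=\frac1n\sum_xf(x)g(x)$, $\|f\|_p=(\frac1n\sum_x|f(x)|^p)^{1/p}$, $\|f\|_\infty=\max_x|f(x)|$. The dual norm is $\|\phi\|^*=\max\{\langle f,\phi\rangle:\|f\|\le1\}$. *)

(* Defs.v *)
From HB Require Import structures.
From mathcomp Require Import all_boot all_order all_algebra.
From mathcomp Require Import all_classical all_reals.
Set Implicit Arguments. Unset Strict Implicit. Unset Printing Implicit Defensive.
Import Order.TTheory GRing.Theory Num.Theory.
Local Open Scope ring_scope.
Local Open Scope classical_set_scope.

(* Functions on {1,...,n} are row vectors 'rV[R]_n; f ord0 i is the value at i. *)

Definition ip (R : realType) (n : nat) (f g : 'rV[R]_n) : R :=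
  n%:R^-1 * \sum_(i < n) f ord0 i * g ord0 i.

Definition norm1 (R : realType) (n : nat) (f : 'rV[R]_n) : R :=
  n%:R^-1 * \sum_(i < n) `|f ord0 i|.

Definition norm2 (R : realType) (n : nat) (f : 'rV[R]_n) : R :=
  Num.sqrt (n%:R^-1 * \sum_(i < n) f ord0 i ^+ 2).

Definition norminf (R : realType) (n : nat) (f : 'rV[R]_n) : R :=
  \big[Num.max/0]_(i < n) `|f ord0 i|.

Definition is_norm (R : realType) (n : nat) (N : 'rV[R]_n -> R) : Prop :=
  (forall f, 0 <= N f) /\
  (forall f, N f = 0 -> f = 0) /\
  (forall (a : R) f, N (a *: f) = `|a| * N f) /\
  (forall f g, N (f + g) <= N f + N g).

Definition dual_norm (R : realType) (n : nat) (N : 'rV[R]_n -> R)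
  (phi : 'rV[R]_n) : R :=
  sup [set ip f phi | f in [set f : 'rV[R]_n | N f <= 1]].

Definition spans (R : realType) (n : nat) (Sigma : set 'rV[R]_n) : Prop :=
  forall f : 'rV[R]_n, exists (k : nat) (lam : 'I_k -> R) (s : 'I_k -> 'rV[R]_n),
    (forall i, Sigma (s i)) /\ f = \sum_(i < k) lam i *: s i.

(* Main.v *)
Require Import Defs.
From HB Require Import structures.
From mathcomp Require Import all_boot all_order all_algebra.
From mathcomp Require Import all_classical all_reals.
From mathcomp Require Import ring lra.
Import Order.TTheory GRing.Theory Num.Theory.
Local Open Scope ring_scope.
Local Open Scope classical_set_scope.
Section Sub.
Variable R : realType.

Lemma inf_le_el (E : set R) b x : (forall y, E y -> b <= y) -> E x -> inf E <= x.
Proof. move=> hb Ex; apply: (ge_inf _ Ex); by exists b. Qed.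

Lemma le_inf_all (E : set R) x : E !=set0 -> (forall y, E y -> x <= y) -> x <= inf E.
Proof. move=> ne hb; exact: lb_le_inf. Qed.

Lemma two_gt0 : (0:R) < 2. Proof. lra. Qed.

Variable V : lmodType R.

Definition sublin (q : V -> R) :=
  (forall (a : R) v, 0 < a -> q (a *: v) = a * q v) /\ (forall u v, q (u + v) <= q u + q v).

Lemma sublin0 q : sublin q -> q 0 = 0.
Proof.
move=> [h _]; have := h 2 0 two_gt0; rewrite scaler0 => e; lra.
Qed.

Lemma sublinZ0 q a v : sublin q -> 0 <= a -> q (a *: v) = a * q v.
Proof.
move=> hq; rewrite le_eqVlt => /orP[/eqP<-|]; last exact: hq.1.
by rewrite scale0r mul0r (@sublin0 q hq).
Qed.

Definition DQ (q : V -> R) x v t := (q (x + t *: v) - q x) / t.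

Lemma DQ_lb q x v t : sublin q -> 0 < t -> - q (- v) <= DQ q x v t.
Proof.
move=> hq t0; rewrite /DQ ler_pdivlMr //.
have := hq.2 (x + t *: v) (t *: (- v)).
rewrite hq.1 // scalerN addrK => h; lra.
Qed.

Lemma DQ_mono q x v s t : sublin q -> 0 < s -> s <= t -> DQ q x v s <= DQ q x v t.
Proof.
move=> hq s0 st; have t0 : 0 < t by apply: lt_le_trans st.
rewrite /DQ ler_pdivrMr // mulrAC ler_pdivlMr //.
have e : x + s *: v = (1 - s / t) *: x + (s / t) *: (x + t *: v).
  rewrite scalerDr scalerA mulfVK ?gt_eqF // scalerBl scale1r; by rewrite addrA subrK.
have h1 : 0 <= 1 - s / t by rewrite subr_ge0 ler_pdivrMr // mul1r.
have h2 : 0 <= s / t by apply: divr_ge0; apply: ltW.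
have := hq.2 ((1 - s / t) *: x) ((s / t) *: (x + t *: v)).
rewrite -e (sublinZ0 _ _ _ hq h1) (sublinZ0 _ _ _ hq h2) => h.
have ht : (s / t) * t = s by rewrite mulfVK ?gt_eqF.
move: h ht h1 h2; set u := s / t => h ht h1 h2.
have h3 : 0 <= ((1 - u) * q x + u * q (x + t *: v) - q (x + s *: v)) * t.
  by apply: mulr_ge0; [lra | apply: ltW].
have e2 : ((1 - u) * q x + u * q (x + t *: v) - q (x + s *: v)) * t =
   q x * t - s * q x + s * q (x + t *: v) - q (x + s *: v) * t.
  by rewrite -ht; ring.
lra.
Qed.

Definition D (q : V -> R) x v := inf [set DQ q x v t | t in [set t : R | 0 < t]].

Lemma D_ne q x v : [set DQ q x v t | t in [set t : R | 0 < t]] !=set0.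
Proof. by exists (DQ q x v 1); exists 1 => //=; apply: ltr01. Qed.

Lemma D_le q x v t : sublin q -> 0 < t -> D q x v <= DQ q x v t.
Proof.
move=> hq t0; apply: (@inf_le_el _ (- q (- v))); last by exists t.
by move=> _ [s s0 <-]; apply: DQ_lb.
Qed.

Lemma D_ge q x v b : (forall t, 0 < t -> b <= DQ q x v t) -> b <= D q x v.
Proof. move=> h; apply: le_inf_all; first exact: D_ne. by move=> _ [s s0 <-]; apply: h. Qed.

Lemma D_lb q x v : sublin q -> - q (- v) <= D q x v.
Proof. by move=> hq; apply: D_ge => t t0; apply: DQ_lb. Qed.

Lemma D_le_q q x v : sublin q -> D q x v <= q v.
Proof.
move=> hq; apply: le_trans (@D_le q x v 1 hq ltr01) _.
rewrite /DQ divr1 scale1r; have := hq.2 x v; lra.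
Qed.

Lemma D_homle q x v a : sublin q -> 0 < a -> D q x (a *: v) <= a * D q x v.
Proof.
move=> hq a0; rewrite -ler_pdivrMl //; apply: D_ge => t t0.
rewrite ler_pdivrMl //.
have -> : a * DQ q x v t = DQ q x (a *: v) (t / a).
  by rewrite /DQ scalerA mulfVK ?gt_eqF // invf_div mulrCA.
by apply: D_le => //; apply: divr_gt0.
Qed.

Lemma D_sublin q x : sublin q -> sublin (D q x).
Proof.
move=> hq; split.
  move=> a v a0; apply/eqP; rewrite eq_le D_homle //=.
  have := @D_homle q x (a *: v) a^-1 hq; rewrite scalerA mulVf ?gt_eqF // scale1r invr_gt0.
  by move=> /(_ a0); rewrite -(ler_pM2l a0) mulrA divff ?gt_eqF // mul1r.
move=> u v.
suff h : forall s t, 0 < s -> 0 < t -> D q x (u + v) <= DQ q x u s + DQ q x v t.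
  have h1 : forall t, 0 < t -> D q x (u + v) - DQ q x v t <= D q x u.
    by move=> t t0; apply: D_ge => s s0; have := h s t s0 t0; lra.
  have h2 : D q x (u + v) - D q x u <= D q x v.
    by apply: D_ge => t t0; have := h1 t t0; lra.
  lra.
move=> s t s0 t0.
set r := Num.min s t / 2.
have r0 : 0 < r by rewrite /r divr_gt0 // lt_min s0 t0.
have rs : 2 * r <= s by rewrite /r mulrC mulfVK ?pnatr_eq0 // ge_min lexx.
have rt : 2 * r <= t by rewrite /r mulrC mulfVK ?pnatr_eq0 // ge_min lexx orbT.
apply: le_trans (@D_le q x (u + v) r hq r0) _.
have hs := @DQ_mono q x u _ _ hq (mulr_gt0 two_gt0 r0) rs.
have ht := @DQ_mono q x v _ _ hq (mulr_gt0 two_gt0 r0) rt.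
suff : DQ q x (u + v) r <= DQ q x u (2 * r) + DQ q x v (2 * r) by lra.
rewrite /DQ.
have h2r : 2^-1 * (2 * r) = r by rewrite mulrA mulVf ?pnatr_eq0 // mul1r.
have hx : 2^-1 *: x + 2^-1 *: x = x.
  rewrite -scalerDl; have -> : (2^-1 + 2^-1 : R) = 1 by lra.
  by rewrite scale1r.
have e : x + r *: (u + v) = 2^-1 *: (x + (2 * r) *: u) + 2^-1 *: (x + (2 * r) *: v).
  by rewrite !scalerDr !scalerA h2r addrACA hx.
have := hq.2 (2^-1 *: (x + (2 * r) *: u)) (2^-1 *: (x + (2 * r) *: v)).
rewrite -e !hq.1 ?invr_gt0 ?two_gt0 // => h.
have -> : (q (x + (2 * r) *: u) - q x) / (2 * r) + (q (x + (2 * r) *: v) - q x) / (2 * r)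
   = (2^-1 * q (x + (2 * r) *: u) + 2^-1 * q (x + (2 * r) *: v) - q x) / r.
  by field; rewrite gt_eqF.
apply: ler_wpM2r; first by rewrite invr_ge0 ltW.
lra.
Qed.

Definition LinAlong (q : V -> R) u := q (- u) = - q u.

Lemma D_self q x : sublin q -> D q x x = q x /\ LinAlong (D q x) x.
Proof.
move=> hq.
have hD : forall t, 0 < t -> DQ q x x t = q x.
  move=> t t0; rewrite /DQ -{1}[x]scale1r -scalerDl hq.1; last by lra.
  by field; rewrite gt_eqF.
have e1 : D q x x = q x.
  apply/eqP; rewrite eq_le; apply/andP; split.
    by have := @D_le q x x 1 hq ltr01; rewrite hD // ltr01.
  by apply: D_ge => t t0; rewrite hD.
split => //; rewrite /LinAlong e1.
apply/eqP; rewrite eq_le; apply/andP; split.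
  have h0 : (0:R) < 2^-1 by rewrite invr_gt0 two_gt0.
  apply: le_trans (@D_le q x (- x) 2^-1 hq h0) _.
  rewrite /DQ scalerN -{1}[x]scale1r -scalerBl hq.1; last by lra.
  have -> : (1 - 2^-1 : R) = 2^-1 by lra.
  have -> : (2^-1 * q x - q x) / 2^-1 = - q x by field.
  by [].
by have := @D_lb q x (- x) hq; rewrite opprK.
Qed.

Lemma D_lin q x u : sublin q -> LinAlong q u -> D q x u = q u /\ LinAlong (D q x) u.
Proof.
move=> hq hu; have hD := @D_sublin q x hq.
have z := @sublin0 (D q x) hD.
have s1 := hD.2 u (- u); rewrite subrr z in s1.
have l1 := @D_le_q q x u hq; have l2 := @D_le_q q x (- u) hq.
rewrite /LinAlong in hu *; rewrite hu in l2.
have e : D q x u = q u by lra.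
split => //; lra.
Qed.

Lemma lin_scale q u t : sublin q -> LinAlong q u -> q (t *: u) = t * q u.
Proof.
move=> hq hu; case: (ltrgt0P t) => [t0|t0|->]; first exact: hq.1.
  rewrite -[t]opprK scaleNr -scalerN hq.1 ?oppr_gt0 // hu; ring.
by rewrite scale0r mul0r (@sublin0 q hq).
Qed.

Lemma sublin_sum q (I : Type) (r : seq I) (F : I -> V) :
  sublin q -> q (\sum_(i <- r) F i) <= \sum_(i <- r) q (F i).
Proof.
move=> hq; elim/big_ind2: _ => //; first by rewrite (@sublin0 q hq).
move=> x1 x2 y1 y2 h1 h2; apply: le_trans (hq.2 _ _) _; exact: lerD.
Qed.
End Sub.
Arguments sublin {R V}.
Arguments sublin0 {R V}.
Arguments sublinZ0 {R V}.
Arguments DQ {R V}.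
Arguments D {R V}.
Arguments D_sublin {R V}.
Arguments D_le_q {R V}.
Arguments D_self {R V}.
Arguments D_lin {R V}.
Arguments lin_scale {R V}.
Arguments sublin_sum {R V}.
Arguments LinAlong {R V}.
Arguments D_lb {R V}.

Section HB.
Variable R : realType.
Variable n : nat.

Definition em (m : nat) : 'rV[R]_n := \row_(j < n) ((j : nat) == m)%:R.

Lemma row_decomp (g : 'rV[R]_n) : g = \sum_(i < n) g ord0 i *: em i.
Proof.
apply/rowP => j; rewrite summxE (bigD1 j) //= big1 ?addr0.
  by rewrite !mxE eqxx mulr1.
move=> i ij; rewrite !mxE; case: eqP => [e|_]; last by rewrite mulr0. by case/eqP: ij; apply: val_inj.
Qed.

Lemma lin_form (q : 'rV[R]_n -> R) : sublin q -> (forall i : 'I_n, LinAlong q (em i)) ->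
  forall g, q g = \sum_(i < n) g ord0 i * q (em i).
Proof.
move=> hq hl g.
have hs : forall h : 'rV[R]_n, q h <= \sum_(i < n) h ord0 i * q (em i).
  move=> h; rewrite {1}(row_decomp h); apply: le_trans (sublin_sum _ _ _ _ hq) _.
  by apply: ler_sum => i _; rewrite lin_scale.
have h1 := hs g; have h2 := hs (- g).
have h3 := hq.2 g (- g); rewrite subrr sublin0 // in h3.
have e : \sum_(i < n) (- g) ord0 i * q (em i) = - \sum_(i < n) g ord0 i * q (em i).
  by rewrite -sumrN; apply: eq_bigr => i _; rewrite mxE mulNr.
rewrite e in h2; lra.
Qed.

Lemma HB_iter (p : 'rV[R]_n -> R) (f : 'rV[R]_n) : sublin p -> forall m : nat, exists q : 'rV[R]_n -> R,
  [/\ sublin q, (forall g, q g <= p g), q f = p f, LinAlong q f &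
      (forall i : 'I_n, (i < m)%N -> LinAlong q (em i))].
Proof.
move=> hp; elim=> [|m [q [hq1 hq2 hq3 hq4 hq5]]].
  have [e1 e2] := D_self p f hp.
  exists (D p f); split => //; first exact: D_sublin.

  by move=> g; apply: D_le_q.
exists (D q (em m)); have hD := D_sublin q (em m) hq1; split => //.
- by move=> g; apply: le_trans (D_le_q _ _ g hq1) (hq2 g).
- by have [-> _] := D_lin q (em m) _ hq1 hq4.
- by have [_ h] := D_lin q (em m) _ hq1 hq4.
move=> i; rewrite ltnS leq_eqVlt => /orP[/eqP ei|im].
  by have [_] := D_self q (em m) hq1; rewrite ei.
by have [_ h] := D_lin q (em m) _ hq1 (hq5 i im).
Qed.

Lemma HB (p : 'rV[R]_n -> R) (f : 'rV[R]_n) : sublin p -> exists a : 'rV[R]_n,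
  (forall g : 'rV[R]_n, \sum_(i < n) g ord0 i * a ord0 i <= p g) /\
  \sum_(i < n) f ord0 i * a ord0 i = p f.
Proof.
move=> hp; have [q [hq1 hq2 hq3 hq4 hq5]] := HB_iter p f hp n.
have hl : forall i : 'I_n, LinAlong q (em i) by move=> i; apply: hq5.
exists (\row_(i < n) q (em i)); split.
  move=> g; apply: le_trans (hq2 g); rewrite (lin_form q hq1 hl g).
  by apply: ler_sum => i _; rewrite mxE.
rewrite -hq3 (lin_form q hq1 hl f); apply: eq_bigr => i _; by rewrite mxE.
Qed.
End HB.


Section Dec.
Variable R : realType.
Variable n : nat.
Variable Sigma : set 'rV[R]_n.
Variable N : 'rV[R]_n -> R.
Hypothesis hN : is_norm N.
Variables C eta theta : R.
Hypothesis C0 : 0 < C.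
Hypothesis eta0 : 0 < eta.
Hypothesis theta0 : 0 < theta.

Lemma N0 : N 0 = 0.
Proof. by have := hN.2.2.1 0 0; rewrite scale0r normr0 mul0r. Qed.

Lemma norm1Z a (g : 'rV[R]_n) : norm1 (a *: g) = `|a| * norm1 g.
Proof.
rewrite /norm1 mulrCA; congr (_ * _); rewrite mulr_sumr; apply: eq_bigr => i _.
by rewrite mxE normrM.
Qed.

Lemma norm1_ge0 (g : 'rV[R]_n) : 0 <= norm1 g.
Proof. by rewrite /norm1 mulr_ge0 ?invr_ge0 ?ler0n //; apply: sumr_ge0 => i _. Qed.

Lemma norm1D (g h : 'rV[R]_n) : norm1 (g + h) <= norm1 g + norm1 h.
Proof.
rewrite /norm1 -mulrDr ler_wpM2l ?invr_ge0 ?ler0n // -big_split /=.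
by apply: ler_sum => i _; rewrite mxE ler_normD.
Qed.

Lemma norm10 : norm1 (0 : 'rV[R]_n) = 0.
Proof. by have := norm1Z 0 0; rewrite scale0r normr0 mul0r. Qed.

Definition combo (l : seq (R * 'rV[R]_n)) := \sum_(x <- l) x.1 *: x.2.
Definition cost1 (l : seq (R * 'rV[R]_n)) := \sum_(x <- l) `|x.1|.

Definition Dec (g : 'rV[R]_n) : set R :=
  [set y | exists l f2 f3, (forall x, x \in l -> Sigma x.2) /\ g = combo l + f2 + f3 /\
     y = cost1 l / C + N f2 / eta + norm1 f3 / theta].

Definition pdec g := inf (Dec g).

Lemma Dec_ne g : Dec g !=set0.
Proof.
exists (cost1 [::] / C + N 0 / eta + norm1 g / theta).
exists [::], 0, g; split => //; split => //.
by rewrite /combo big_nil !add0r.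
Qed.

Lemma Dec_ge0 g y : Dec g y -> 0 <= y.
Proof.
move=> [l [f2 [f3 [_ [_ ->]]]]].
have c0 : 0 <= cost1 l by apply: sumr_ge0 => i _.
have n2 := hN.1 f2; have n3 := norm1_ge0 f3.
by rewrite !addr_ge0 // divr_ge0 // ltW.
Qed.

Lemma pdec_le g y : Dec g y -> pdec g <= y.
Proof. by move=> hy; apply: (@inf_le_el _ _ 0) => // z; apply: Dec_ge0. Qed.

Lemma pdec_ge g b : (forall y, Dec g y -> b <= y) -> b <= pdec g.
Proof. by move=> h; apply: le_inf_all => //; apply: Dec_ne. Qed.

Lemma DecZ g y a : 0 < a -> Dec g y -> Dec (a *: g) (a * y).
Proof.
move=> a0 [l [f2 [f3 [hs [-> ->]]]]].
exists [seq (a * x.1, x.2) | x <- l], (a *: f2), (a *: f3); split.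
  by move=> x /mapP [z zl ->] /=; apply: hs.
split.
  rewrite !scalerDr /combo big_map scaler_sumr; congr (_ + _ + _).
  by apply: eq_bigr => x _; rewrite scalerA.
rewrite hN.2.2.1 norm1Z /cost1 big_map (gtr0_norm a0).
have -> : \sum_(j <- l) `|a * j.1| = a * \sum_(x <- l) `|x.1|.
  by rewrite mulr_sumr; apply: eq_bigr => x _; rewrite normrM gtr0_norm.
rewrite !mulrA !mulrDr !mulrA //.
Qed.

Lemma DecD g h y z : Dec g y -> Dec h z -> exists2 w, Dec (g + h) w & w <= y + z.
Proof.
move=> [l [f2 [f3 [hs [-> ->]]]]] [l' [f2' [f3' [hs' [-> ->]]]]].
exists (cost1 (l ++ l') / C + N (f2 + f2') / eta + norm1 (f3 + f3') / theta).
  exists (l ++ l'), (f2 + f2'), (f3 + f3'); split.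
    by move=> x; rewrite mem_cat => /orP[/hs|/hs'].
  split => //; rewrite /combo big_cat /=.
  rewrite addrACA; congr (_ + _); exact: addrACA.
rewrite /cost1 big_cat /=.
have h1 := hN.2.2.2 f2 f2'; have h2 := norm1D f3 f3'.
have h1' : N (f2 + f2') / eta <= N f2 / eta + N f2' / eta.
  by rewrite -mulrDl ler_wpM2r // invr_ge0 ltW.
have h2' : norm1 (f3 + f3') / theta <= norm1 f3 / theta + norm1 f3' / theta.
  by rewrite -mulrDl ler_wpM2r // invr_ge0 ltW.
rewrite mulrDl; lra.
Qed.

Lemma pdec_sublin : sublin pdec.
Proof.
have hle : forall a g, 0 < a -> pdec (a *: g) <= a * pdec g.
  move=> a g a0; rewrite -ler_pdivrMl //; apply: pdec_ge => y hy.
  rewrite ler_pdivrMl //; apply: pdec_le; exact: DecZ.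
split.
  move=> a v a0; apply/eqP; rewrite eq_le hle //=.
  have := hle a^-1 (a *: v); rewrite invr_gt0 scalerA mulVf ?gt_eqF // scale1r.
  by move=> /(_ a0); rewrite -(ler_pM2l a0) mulrA divff ?gt_eqF // mul1r.
move=> u v.
have h1 : forall z, Dec v z -> pdec (u + v) - z <= pdec u.
  move=> z hz; apply: pdec_ge => y hy.
  have [w hw wle] := DecD _ _ _ _ hy hz; have := pdec_le _ _ hw; lra.
have h2 : pdec (u + v) - pdec u <= pdec v.
  by apply: pdec_ge => z hz; have := h1 z hz; lra.
lra.
Qed.
End Dec.


Section Fun.
Variable R : realType.
Variable n : nat.

Definition Lf (a g : 'rV[R]_n) := \sum_(i < n) g ord0 i * a ord0 i.

Lemma LfN a g : Lf a (- g) = - Lf a g.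
Proof. by rewrite /Lf -sumrN; apply: eq_bigr => i _; rewrite mxE mulNr. Qed.

Lemma Lf_sym a g : Lf a g = Lf g a.
Proof. by apply: eq_bigr => i _; rewrite mulrC. Qed.

Lemma Lf_sumL k (a : nat -> 'rV[R]_n) g :
  Lf (\sum_(j < k) a j) g = \sum_(j < k) Lf (a j) g.
Proof.
rewrite /Lf exchange_big /=; apply: eq_bigr => i _.
by rewrite summxE mulr_sumr.
Qed.

Lemma Lf_em a (i : 'I_n) : Lf a (em R n i) = a ord0 i.
Proof.
rewrite /Lf (bigD1 i) //= big1 ?addr0; first by rewrite mxE eqxx mul1r.
move=> j ji; rewrite mxE; case: eqP => [e|_]; last by rewrite mul0r.
by case/eqP: ji; apply: val_inj.
Qed.

Lemma norm1_em (i : 'I_n) : norm1 (em R n i) = n%:R^-1.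
Proof.
rewrite /norm1 (bigD1 i) //= big1 ?addr0; first by rewrite mxE eqxx normr1 mulr1.
move=> j ji; rewrite mxE; case: eqP => [e|_]; last by rewrite normr0.
by case/eqP: ji; apply: val_inj.
Qed.

Variable Sigma : set 'rV[R]_n.
Variable N : 'rV[R]_n -> R.
Hypothesis hN : is_norm N.
Variables C eta theta : R.
Hypothesis C0 : 0 < C.
Hypothesis eta0 : 0 < eta.
Hypothesis theta0 : 0 < theta.

Let P := @pdec R n Sigma N C eta theta.

Lemma fun_props (a : 'rV[R]_n) : (forall g, Lf a g <= P g) ->
  [/\ forall s, Sigma s -> `|Lf a s| <= C^-1,
      forall g, Lf a g <= N g / eta &
      forall i, `|a ord0 i| <= n%:R^-1 / theta].
Proof.
move=> ha; split.
- move=> s hs.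
  have h1 : Lf a s <= C^-1.
    apply: le_trans (ha s) _; apply: pdec_le => //.
    exists [:: (1, s)], 0, 0; split; first by move=> x; rewrite inE => /eqP ->.
    split; first by rewrite /combo big_cons big_nil scale1r !addr0.
    by rewrite /cost1 big_cons big_nil normr1 addr0 mul1r N0 // norm10 !mul0r !addr0.
  have h2 : Lf a (- s) <= C^-1.
    apply: le_trans (ha _) _; apply: pdec_le => //.
    exists [:: (-1, s)], 0, 0; split; first by move=> x; rewrite inE => /eqP ->.
    split; first by rewrite /combo big_cons big_nil scaleN1r !addr0.
    by rewrite /cost1 big_cons big_nil normrN normr1 addr0 mul1r N0 // norm10 !mul0r !addr0.
  rewrite LfN in h2; rewrite ler_norml; apply/andP; split; lra.
- move=> g; apply: le_trans (ha g) _; apply: pdec_le => //.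
  exists [::], g, 0; split => //; split; first by rewrite /combo big_nil add0r addr0.
  by rewrite /cost1 big_nil mul0r add0r norm10 mul0r addr0.
move=> i.
have hg : forall g, Lf a g <= norm1 g / theta.
  move=> g; apply: le_trans (ha g) _; apply: pdec_le => //.
  exists [::], 0, g; split => //; split; first by rewrite /combo big_nil !add0r.
  by rewrite /cost1 big_nil mul0r add0r N0 // mul0r add0r.
have h1 := hg (em R n i); have h2 := hg (- em R n i).
rewrite LfN Lf_em in h2; rewrite Lf_em norm1_em in h1.
rewrite -scaleN1r norm1Z normrN normr1 mul1r norm1_em in h2.
rewrite ler_norml; apply/andP; split; lra.
Qed.
End Fun.


Fixpoint Cs (R : realType) (c : R -> R) (theta : R) (eta : R -> R) (j : nat) : R :=
  if j is j'.+1 then Cs R c theta eta j' + 1 + `|theta / c (theta * eta (Cs R c theta eta j') / 2)|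
  else 1.
Arguments Cs {R}.

Lemma Cs_ge1 (R : realType) c theta eta j : 1 <= @Cs R c theta eta j.
Proof.
elim: j => [|j IH] /=; first by [].
have := normr_ge0 (theta / c (theta * eta (Cs c theta eta j) / 2)); lra.
Qed.

Lemma Cs_mono (R : realType) c theta eta i j : (i <= j)%N -> @Cs R c theta eta i <= Cs c theta eta j.
Proof.
elim: j => [|j IH]; first by rewrite leqn0 => /eqP ->.
rewrite leq_eqVlt => /orP[/eqP -> //|]; rewrite ltnS => /IH h /=.
have := normr_ge0 (theta / c (theta * eta (Cs c theta eta j) / 2)); lra.
Qed.

Lemma Cs_big (R : realType) c theta eta j :
  0 < c (theta * eta (@Cs R c theta eta j) / 2) -> 0 < theta ->
  theta / Cs c theta eta j.+1 < c (theta * eta (Cs c theta eta j) / 2).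
Proof.
move=> cp tp; set e := c _; have h1 := Cs_ge1 _ c theta eta j.+1.
rewrite ltr_pdivrMr; last by lra.
have h2 : theta / e < Cs c theta eta j.+1.
  rewrite /=; have := ler_norm (theta / e); have := Cs_ge1 _ c theta eta j; rewrite -/e; lra.
by move: h2; rewrite ltr_pdivrMr // mulrC.
Qed.

Lemma gram_contra (R : realType) (n k : nat) (theta : R) (A : nat -> 'rV[R]_n) (f : 'rV[R]_n) :
  0 < theta -> 2 * (theta ^+ 2)^-1 < k%:R ->
  \sum_(i < n) f ord0 i ^+ 2 <= n%:R ->
  (forall j, (j < k)%N -> 1 <= Lf R n (A j) f) ->
  (forall i j, (i < k)%N -> (j < k)%N ->
     n%:R * Lf R n (A i) (A j) <= 2^-1 + (i == j)%:R * (theta ^+ 2)^-1) ->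
  False.
Proof.
move=> th0 hk hf hlow hij.
set T := (theta ^+ 2)^-1.
have T0 : 0 < T by rewrite invr_gt0 exprn_gt0.
have k0 : (0 < k)%N.
  case: k hk {hlow hij} => // h; have : 0 < 2 * T by rewrite mulr_gt0 // ltr0Sn.
  by move: h; rewrite /T => h1 h2; move: (lt_trans h2 h1); rewrite ltxx.
have n0 : (0 < n)%N.
  case: (posnP n) => // n0; have := hlow 0%N k0.
  rewrite /Lf big1 ?ler10 //.
  by move=> i _; have := ltn_ord i; rewrite {2}n0.
set As := \sum_(j < k) A j.
set K : R := k%:R; set M : R := n%:R.
have K0 : (0 : R) < K by rewrite ltr0n.
have M0 : (0 : R) < M by rewrite ltr0n.
have hL : K <= Lf R n As f.
  rewrite /As Lf_sumL.
  have -> : K = \sum_(j < k) (1 : R) by rewrite sumr_const card_ord.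
  by apply: ler_sum => j _; apply: hlow.
have hS : M * Lf R n As As <= K * (K / 2 + T).
  have -> : Lf R n As As = \sum_(i < k) \sum_(j < k) Lf R n (A j) (A i).
    rewrite {1}/As Lf_sumL; apply: eq_bigr => i _.
    by rewrite Lf_sym /As Lf_sumL.
  rewrite mulr_sumr.
  apply: le_trans (_ : \sum_(i < k) \sum_(j < k) (2^-1 + ((j : nat) == i)%:R * T) <= _).
    apply: ler_sum => i _; rewrite mulr_sumr; apply: ler_sum => j _.
    by apply: hij.
  have hin : forall i : 'I_k, \sum_(j < k) (2^-1 + ((j : nat) == i)%:R * T) = K / 2 + T.
    move=> i; rewrite big_split /= sumr_const card_ord /K mulr_natl.
    rewrite (bigD1 i) //= eqxx mul1r big1 ?addr0 //.
    move=> j ji; case: eqP => [e|_]; last by rewrite mul0r.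
    by case/eqP: ji; apply: val_inj.
  by rewrite (eq_bigr _ (fun i _ => hin i)) sumr_const card_ord -[_ *+ k]mulr_natl.
have hAM : 2 * K * M * Lf R n As f <= K ^+ 2 * \sum_(i < n) f ord0 i ^+ 2 + M ^+ 2 * Lf R n As As.
  rewrite /Lf !mulr_sumr -big_split /=; apply: ler_sum => i _.
  have := sqr_ge0 (K * f ord0 i - M * As ord0 i).
  have e : (K * f ord0 i - M * As ord0 i) ^+ 2 =
    K ^+ 2 * f ord0 i ^+ 2 + M ^+ 2 * (As ord0 i * As ord0 i) - 2 * K * M * (f ord0 i * As ord0 i).
    by ring.
  rewrite e; lra.
have h1 : 2 * K * M * K <= 2 * K * M * Lf R n As f.
  by apply: ler_wpM2l => //; rewrite !mulr_ge0 // ltW.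
have h2 : K ^+ 2 * \sum_(i < n) f ord0 i ^+ 2 <= K ^+ 2 * M.
  by apply: ler_wpM2l => //; rewrite sqr_ge0.
have h3 : M ^+ 2 * Lf R n As As <= M * (K * (K / 2 + T)).
  by rewrite expr2 -mulrA; apply: ler_wpM2l => //; rewrite ltW.
have h4 : 0 < K * M * (K / 2 - T).
  apply: mulr_gt0; first exact: mulr_gt0. have hk2 : 2 * T < K by []. lra.
have e1 : K ^+ 2 * M = K * M * K by rewrite expr2; ring.
nra.
Qed.


Theorem theorem3p8 (R : realType) (c : R -> R) (theta : R) (eta : R -> R) :
  0 < theta ->
  (forall x, 0 <= x -> 0 < eta x) ->
  (forall x y, 0 <= x -> x <= y -> eta y <= eta x) ->
  exists C0 : R,
  forall (n : nat) (Sigma : set 'rV[R]_n) (N : 'rV[R]_n -> R),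
    spans Sigma ->
    is_norm N ->
    (forall f : 'rV[R]_n, norminf f <= dual_norm N f) ->
    (forall eps : R, 0 < eps ->
       0 < c eps /\
       forall f : 'rV[R]_n, norminf f <= 1 -> eps <= N f ->
         exists2 s, Sigma s & c eps <= `|ip f s|) ->
    forall f : 'rV[R]_n, norm2 f <= 1 ->
      exists (k : nat) (lam : 'I_k -> R) (s : 'I_k -> 'rV[R]_n)
             (f2 f3 : 'rV[R]_n) (C : R),
        (forall i, Sigma (s i)) /\
        f = \sum_(i < k) lam i *: s i + f2 + f3 /\
        C <= C0 /\
        \sum_(i < k) `|lam i| <= C /\
        N f2 <= eta C /\
        norm1 f3 <= theta.
Proof.
move=> th0 etap etad.
set T := (theta ^+ 2)^-1.
have T0 : 0 <= 2 * T by rewrite mulr_ge0 // invr_ge0 exprn_ge0 // ltW.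
set k := Num.Def.archi_bound (2 * T).
have hk : 2 * T < k%:R by apply: archi_boundP.
pose Cj := Cs c theta eta.
exists (Cj k) => n Sigma N _ hN _ hc f hf.
have Cpos : forall j, 0 < Cj j by move=> j; apply: lt_le_trans (Cs_ge1 _ c theta eta j); apply: ltr01.
have Epos : forall j, 0 < eta (Cj j) by move=> j; apply: etap; apply: ltW.
pose P j := pdec R n Sigma N (Cj j) (eta (Cj j)) theta.
case: (pselect (exists j, (j < k)%N /\ P j f < 1)) => [[j [jk hj]]|hno].
  have [y [l [f2 [f3 [hs [hfe hy]]]]] ylt] := inf_lt (Dec_ne _ _ _ _ _ _ _ f) hj.
  exists (size l), (fun i => (nth (0, 0) l i).1), (fun i => (nth (0, 0) l i).2), f2, f3, (Cj j).
  have c0 : 0 <= cost1 R n l by apply: sumr_ge0 => i _.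
  have n2 := hN.1 f2; have n3 := norm1_ge0 _ _ f3.
  have a1 : 0 <= cost1 R n l / Cj j by rewrite divr_ge0 // ltW.
  have a2 : 0 <= N f2 / eta (Cj j) by rewrite divr_ge0 // ltW.
  have a3 : 0 <= norm1 f3 / theta by rewrite divr_ge0 // ltW.
  split; first by move=> i; apply: hs; apply: mem_nth.
  split.
    by rewrite hfe /combo (big_nth (0, 0)) big_mkord.
  split; first by apply: Cs_mono; apply: ltnW.
  split.
    have : cost1 R n l / Cj j < 1 by lra.
    rewrite ltr_pdivrMr // mul1r /cost1 (big_nth (0, 0)) big_mkord => h.
    exact: ltW.
  split.
    have : N f2 / eta (Cj j) < 1 by lra.
    by rewrite ltr_pdivrMr // mul1r => /ltW.
  have : norm1 f3 / theta < 1 by lra.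
  by rewrite ltr_pdivrMr // mul1r => /ltW.
exfalso.
have hA : forall j, exists a : 'rV[R]_n, (j < k)%N ->
    (forall g, Lf R n a g <= P j g) /\ 1 <= Lf R n a f.
  move=> j.
  have [a [ha1 ha2]] := HB _ _ (P j) f (pdec_sublin _ _ Sigma N hN _ _ _ (Cpos j) (Epos j) th0).
  exists a => jk; split => //.
  rewrite /Lf ha2 leNgt; apply/negP => h; apply: hno; exists j; split => //.
have [A hA'] := choice hA.
have k0 : (0 < k)%N by rewrite -(ltr0n R); apply: le_lt_trans hk.
have n0 : (0 < n)%N.
  case: (posnP n) => // n0; have := (hA' 0%N k0).2.
  rewrite /Lf big1 ?ler10 //.
  by move=> i _; have := ltn_ord i; rewrite {2}n0.
have nR0 : (0 : R) < n%:R by rewrite ltr0n.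
have props : forall j, (j < k)%N -> _ := fun j jk =>
  fun_props _ _ Sigma N hN _ _ _ (Cpos j) (Epos j) th0 (A j) (hA' j jk).1.
have Nsmall : forall j, (0 < j)%N -> (j < k)%N ->
    n%:R * theta * N (A j) < theta * eta (Cj j.-1) / 2.
  move=> j j0 jk; have [hs hg hi] := props j jk.
  set e := theta * eta (Cj j.-1) / 2.
  have e0 : 0 < e by rewrite /e !mulr_gt0 // invr_gt0 ltr0Sn.
  have [ce hce] := hc e e0.
  set b := (n%:R * theta) *: A j.
  have nt0 : 0 < n%:R * theta by rewrite mulr_gt0.
  have hb : norminf b <= 1.
    rewrite /norminf; apply: bigmax_le => // i _.
    rewrite mxE normrM (gtr0_norm nt0).
    have := hi i => h; apply: le_trans (ler_wpM2l (ltW nt0) h) _.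
    have -> : n%:R * theta * (n%:R^-1 / theta) = 1.
      by field; rewrite gt_eqF // gt_eqF.
    by [].
  rewrite ltNge; apply/negP => hle.
  have hNb : e <= N b by rewrite /b hN.2.2.1 (gtr0_norm nt0).
  have [s hs' hcs] := hce b hb hNb.
  have ipe : ip b s = theta * Lf R n (A j) s.
    rewrite /ip /Lf !mulr_sumr; apply: eq_bigr => i _; rewrite mxE.
    by field; rewrite gt_eqF.
  have hcb := Cs_big _ c theta eta (j.-1) ce th0.
  rewrite prednK // in hcb.
  have h1 := hs s hs'.
  rewrite ipe normrM (gtr0_norm th0) in hcs.
  have h2 : theta * `|Lf R n (A j) s| <= theta / Cj j by apply: ler_wpM2l => //; apply: ltW.
  rewrite -/e in hcb; lra.
have offd : forall i j, (i < j)%N -> (j < k)%N -> n%:R * Lf R n (A i) (A j) <= 2^-1.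
  move=> i j ij jk; have ik : (i < k)%N by apply: ltn_trans jk.
  have [_ hg _] := props i ik.
  have j0 : (0 < j)%N by apply: leq_ltn_trans ij.
  have Ns := Nsmall j j0 jk.
  have eij : eta (Cj j.-1) <= eta (Cj i).
    apply: etad; first exact: ltW.
    by apply: Cs_mono; rewrite -ltnS prednK.
  have ei := Epos i; have ej := Epos j.-1.
  set x := n%:R * N (A j).
  have x0 : 0 <= x by rewrite mulr_ge0 // ?hN.1 // ltW.
  have hx : x < eta (Cj j.-1) / 2.
    rewrite -(ltr_pM2l th0).
    have -> : theta * x = n%:R * theta * N (A j) by rewrite /x; ring.
    by rewrite mulrA.
  have h1 : n%:R * Lf R n (A i) (A j) <= x / eta (Cj i).
    by rewrite /x -mulrA; apply: ler_wpM2l; [apply: ltW | apply: hg].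
  have h2 : x / eta (Cj i) <= x / eta (Cj j.-1).
    by apply: ler_wpM2l => //; rewrite lef_pV2 // posrE.
  have h3 : x / eta (Cj j.-1) < 2^-1.
    by rewrite ltr_pdivrMr // mulrC.
  lra.
apply: (@gram_contra R n k theta A f th0 hk).
- have hs : 0 <= n%:R^-1 * \sum_(i < n) f ord0 i ^+ 2.
    by rewrite mulr_ge0 ?invr_ge0 ?ler0n //; apply: sumr_ge0 => i _; rewrite sqr_ge0.
  have hq := sqrtr_ge0 (n%:R^-1 * \sum_(i < n) f ord0 i ^+ 2).
  have hs1 : n%:R^-1 * \sum_(i < n) f ord0 i ^+ 2 <= 1.
    rewrite -(sqr_sqrtr hs) expr2; move: hf; rewrite /norm2 => hf.
    by have := ler_pM hq hq hf hf; rewrite mulr1.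
  by move: hs1; rewrite mulrC ler_pdivrMr // mul1r.
- by move=> j jk; apply: (hA' j jk).2.
move=> i j ik jk; case: (ltngtP i j) => [ij|ji|<-].
- by apply: le_trans (offd i j ij jk) _; rewrite mul0r addr0.
- by rewrite Lf_sym; apply: le_trans (offd j i ji ik) _; rewrite mul0r addr0.
rewrite mul1r.
have [_ _ hi] := props i ik.
have hT : n%:R * Lf R n (A i) (A i) <= (theta ^+ 2)^-1.
  apply: le_trans (_ : n%:R * \sum_(x < n) (n%:R^-1 / theta) ^+ 2 <= _).
    apply: ler_wpM2l; first exact: ltW.
    apply: ler_sum => x _; rewrite expr2.
    apply: le_trans (ler_norm _) _; rewrite normrM.
    by apply: ler_pM => //; apply: hi.
  rewrite sumr_const card_ord -[(_ ^+ 2) *+ n]mulr_natl.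
  have -> : n%:R * (n%:R * (n%:R^-1 / theta) ^+ 2) = (theta ^+ 2)^-1 :> R.
    by field; rewrite gt_eqF // gt_eqF.
  by [].
have : (0 : R) <= 2^-1 by rewrite invr_ge0 ler0n.
lra.
Qed.
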